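(* Consider a port-Hamiltonian descriptor system $(E,J,R,Q,B)$ with $A=(J-R)Q$, $C=B^\top Q$, $(E,A)$ regular, $(E,A,B)$ strongly stabilizable and $(E,A,C)$ strongly detectable, and let $\mathcal P_{\mathrm c},\mathcal P_{\mathrm f}$ be stabilizing solutions of (GC), (GF) such that $I_n+\mathcal P_{\mathrm f}\mathcal P_{\mathrm c}^\top$ is invertible. Let $A_{\mathcal P_{\mathrm c}}=A-BB^\top\mathcal P_{\mathrm c}$ and $\mathcal L=(I_n+\mathcal P_{\mathrm f}\mathcal P_{\mathrm c}^\top)^{-1}\mathcal P_{\mathrm f}$. Then $A_{\mathcal P_{\mathrm c}}\mathcal L^\top+\mathcal LA_{\mathcal P_{\mathrm c}}^\top+BB^\top\preceq0$, $E\mathcal L^\top=\mathcal LE^\top$, $A_{\mathcal P_{\mathrm c}}^\top\mathcal P_{\mathrm c}+\mathcal P_{\mathrm c}^\top A_{\mathcal P_{\mathrm c}}+\begin{bmatrix}-\mathcal P_{\mathrm c}^\top B & C^\top\end{bmatrix}\begin{bmatrix}-\mathcal P_{\mathrm c}^\top B & C^\top\end{bmatrix}^\top=0$, $E^\top\mathcal P_{\mathrm c}=\mathcal P_{\mathrm c}^\top E$.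
   Context: A pH descriptor system: $E,J,R,Q\in\mathbb{R}^{n\times n}$, $B\in\mathbb{R}^{n\times m}$, $E^\top Q=Q^\top E\succeq0$, $J^\top=-J$, $R=R^\top\succeq0$, $A:=(J-R)Q$, $C:=B^\top Q$. Regular pencil: $\det(sE-A)\ne0$ for some $s$; impulse-free: nilpotent part of Weierstraß form vanishes. $(E,A,B)$ strongly stabilizable: $\mathrm{rank}[E\ \ AS\ \ B]=n$ ($\mathrm{im}\,S=\ker E$) and $\mathrm{rank}[\lambda E-A\ \ B]=n$ for $\mathrm{Re}\,\lambda\ge0$; $(E,A,C)$ strongly detectable: $(E^\top,A^\top,C^\top)$ strongly stabilizable. GAREs: (GC) $A^\top\mathcal P_{\mathrm c}+\mathcal P_{\mathrm c}^\top A-\mathcal P_{\mathrm c}^\top BB^\top\mathcal P_{\mathrm c}+C^\top C=0$, $E^\top\mathcal P_{\mathrm c}=\mathcal P_{\mathrm c}^\top E$; (GF) $A\mathcal P_{\mathrm f}^\top+\mathcal P_{\mathrm f}A^\top-\mathcal P_{\mathrm f}C^\top C\mathcal P_{\mathrm f}^\top+BB^\top+2R=0$, $E\mathcal P_{\mathrm f}^\top=\mathcal P_{\mathrm f}E^\top$. Stabilizing: $(E,A-BB^\top\mathcal P_{\mathrm c})$, resp. $(E,A-\mathcal P_{\mathrm f}C^\top C)$, regular, impulse-free with all finite eigenvalues in the open left half-plane. *)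

(* Defs.v *)
From HB Require Import structures.
From mathcomp Require Import all_boot all_order all_algebra.
From mathcomp Require Import complex.
Set Implicit Arguments. Unset Strict Implicit. Unset Printing Implicit Defensive.
Import Order.TTheory GRing.Theory Num.Theory.
Local Open Scope ring_scope.

Section PHDefs.
Variable R : rcfType.

Definition cmx {m n} (M : 'M[R]_(m, n)) : 'M[R[i]]_(m, n) :=
  map_mx (fun x => (x%:C)%C) M.

Definition psd {n} (M : 'M[R]_n) : Prop :=
  M^T = M /\ forall x : 'cV[R]_n, 0 <= (x^T *m M *m x) 0 0.

Definition nsd {n} (M : 'M[R]_n) : Prop := psd (- M).

Definition pH_descriptor {n m} (E J Rm Q : 'M[R]_n) (B : 'M[R]_(n, m)) : Prop :=
  E^T *m Q = Q^T *m E /\ psd (E^T *m Q) /\ J^T = - J /\ psd Rm.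

Definition pH_A {n} (J Rm Q : 'M[R]_n) : 'M[R]_n := (J - Rm) *m Q.
Definition pH_C {n m} (Q : 'M[R]_n) (B : 'M[R]_(n, m)) : 'M[R]_(m, n) := B^T *m Q.

Definition regular_pencil {n} (E A : 'M[R]_n) : Prop :=
  exists s : R[i], \det (s *: cmx E - cmx A) != 0.

(* impulse-free: a (quasi-)Weierstrass form W (sE - A) T =
   diag(sI_r - J, sN - I_k) exists whose nilpotent part N vanishes. *)
Definition impulse_free {n} (E A : 'M[R]_n) : Prop :=
  exists r k (h : (r + k = n)%N) (W T : 'M[R]_n) (Jf : 'M[R]_r),
    [/\ W \in unitmx, T \in unitmx,
        W *m E *m T = castmx (h, h) (block_mx 1%:M 0 0 0) &
        W *m A *m T = castmx (h, h) (block_mx Jf 0 0 1%:M)].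

Definition finite_eig {n} (E A : 'M[R]_n) (l : R[i]) : Prop :=
  \det (l *: cmx E - cmx A) = 0.

(* strongly stabilizable: rank [E AS B] = n with im S = ker E, and
   rank [lE - A  B] = n for Re l >= 0.  S is taken as the matrix whose
   columns are the rows of kermx E^T, i.e. a basis-spanning family of ker E. *)
Definition strongly_stabilizable {n m} (E A : 'M[R]_n) (B : 'M[R]_(n, m)) : Prop :=
  let S := (kermx E^T)^T in
  \rank (row_mx (row_mx E (A *m S)) B) = n /\
  forall l : R[i], 0 <= complex.Re l ->
    \rank (row_mx (l *: cmx E - cmx A) (cmx B)) = n.

Definition strongly_detectable {n m} (E A : 'M[R]_n) (C : 'M[R]_(m, n)) : Prop :=
  strongly_stabilizable E^T A^T C^T.

Definition stable_pencil {n} (E Acl : 'M[R]_n) : Prop :=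
  [/\ regular_pencil E Acl, impulse_free E Acl &
      forall l : R[i], finite_eig E Acl l -> complex.Re l < 0].

Definition stab_GC {n m} (E A : 'M[R]_n) (B : 'M[R]_(n, m)) (C : 'M[R]_(m, n))
    (Pc : 'M[R]_n) : Prop :=
  [/\ A^T *m Pc + Pc^T *m A - Pc^T *m B *m B^T *m Pc + C^T *m C = 0,
      E^T *m Pc = Pc^T *m E &
      stable_pencil E (A - B *m B^T *m Pc)].

Definition stab_GF {n m} (E A Rm : 'M[R]_n) (B : 'M[R]_(n, m)) (C : 'M[R]_(m, n))
    (Pf : 'M[R]_n) : Prop :=
  [/\ A *m Pf^T + Pf *m A^T - Pf *m C^T *m C *m Pf^T + B *m B^T + 2%:R *: Rm = 0,
      E *m Pf^T = Pf *m E^T &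
      stable_pencil E (A - Pf *m C^T *m C)].

End PHDefs.

(* Main.v *)
Require Import Defs.
From HB Require Import structures.
From mathcomp Require Import all_boot all_order all_algebra.
From mathcomp Require Import complex ring.
Import Order.TTheory GRing.Theory Num.Theory.
Local Open Scope ring_scope.

Lemma eD (R : rcfType) m n (A B : 'M[R]_(m,n)) i j : (A + B) i j = A i j + B i j.
Proof. by rewrite mxE. Qed.
Lemma eN (R : rcfType) m n (A : 'M[R]_(m,n)) i j : (- A) i j = - A i j.
Proof. by rewrite mxE. Qed.
Lemma eZ (R : rcfType) m n (a : R) (A : 'M[R]_(m,n)) i j : (a *: A) i j = a * A i j.
Proof. by rewrite mxE. Qed.

Ltac mxring := rewrite ?(raddfD, raddfB, raddfN) /= ?trmx_mul ?trmxK ?trmx1;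
  rewrite !(mulmxDl, mulmxDr, mulmxBl, mulmxBr, mulNmx, mulmxN, mul1mx, mulmx1, mulmxA);
  apply/matrixP => i j; rewrite !(eD, eN, eZ); ring.

Lemma key (R : rcfType) n m (A F P Rm : 'M[R]_n) (B : 'M[R]_(n,m)) (C : 'M[R]_(m,n)) :
  let X := 1%:M + F *m P^T in
  X *m (A - B *m B^T *m P) *m F^T + F *m (A - B *m B^T *m P)^T *m X^T + X *m (B *m B^T) *m X^T =
  (A *m F^T + F *m A^T - F *m C^T *m C *m F^T + B *m B^T + 2%:R *: Rm)
  + F *m (A^T *m P + P^T *m A - P^T *m B *m B^T *m P + C^T *m C) *m F^T - 2%:R *: Rm.
Proof. move=> X; rewrite /X; mxring. Qed.

Lemma psd_cong (R : rcfType) n (S Rm : 'M[R]_n) : psd Rm -> psd (S *m Rm *m S^T).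
Proof.
case=> hs hq; split; first by rewrite !trmx_mul trmxK hs mulmxA.
move=> x; have := hq (S^T *m x); by rewrite trmx_mul trmxK !mulmxA.
Qed.

Lemma psd_scale (R : rcfType) n (a : R) (Rm : 'M[R]_n) : 0 <= a -> psd Rm -> psd (a *: Rm).
Proof.
move=> ha [hs hq]; split; first by rewrite linearZ /= hs.
move=> x; rewrite -scalemxAr -scalemxAl eZ; exact: mulr_ge0.
Qed.

Theorem mainTheorem10 (R : rcfType) (n m : nat)
    (E J Rm Q : 'M[R]_n) (B : 'M[R]_(n, m)) (Pc Pf : 'M[R]_n) :
  pH_descriptor E J Rm Q B ->
  regular_pencil E (pH_A J Rm Q) ->
  strongly_stabilizable E (pH_A J Rm Q) B ->
  strongly_detectable E (pH_A J Rm Q) (pH_C Q B) ->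
  stab_GC E (pH_A J Rm Q) B (pH_C Q B) Pc ->
  stab_GF E (pH_A J Rm Q) Rm B (pH_C Q B) Pf ->
  (1%:M + Pf *m Pc^T) \in unitmx ->
  let A := pH_A J Rm Q in
  let C := pH_C Q B in
  let APc := A - B *m B^T *m Pc in
  let L := invmx (1%:M + Pf *m Pc^T) *m Pf in
  let M := row_mx (- (Pc^T *m B)) C^T in
  [/\ nsd (APc *m L^T + L *m APc^T + B *m B^T),
      E *m L^T = L *m E^T,
      APc^T *m Pc + Pc^T *m APc + M *m M^T = 0 &
      E^T *m Pc = Pc^T *m E].
Proof.
move=> [_ [_ [_ hR]]] _ _ _ [GC EPc _] [GF EPf _] hX A C APc L M.
set X := 1%:M + Pf *m Pc^T in hX L *.
have hXt : X^T \in unitmx by rewrite unitmx_tr.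
have eXt : X^T = 1%:M + Pc *m Pf^T by rewrite /X raddfD /= trmx1 trmx_mul trmxK.
have hK : (B *m B^T)^T = B *m B^T by rewrite trmx_mul trmxK.
split.
- have hk := key _ _ _ (pH_A J Rm Q) Pf Pc Rm B (pH_C Q B); simpl in hk.
  rewrite -/X -/A -/APc GC GF mulmx0 mul0mx add0r sub0r in hk.
  have h2 : forall N : 'M[R]_n, N *m X^T *m invmx X^T = N.
    by move=> N; rewrite -mulmxA mulmxV // mulmx1.
  have eY : APc *m L^T + L *m APc^T + B *m B^T =
     invmx X *m (- (2%:R *: Rm)) *m (invmx X)^T.
    rewrite -hk /L trmx_mul trmx_inv; clearbody APc X.
    rewrite !mulmxDr !mulmxDl !mulmxA !h2 mulVmx // !mul1mx.
    by rewrite -!mulmxA.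
  rewrite /nsd eY mulmxN mulNmx opprK; apply: psd_cong; apply: psd_scale => //.

- have key2 : X *m E *m Pf^T = Pf *m E^T *m X^T.
    rewrite eXt /X !mulmxDl !mulmxDr mul1mx mulmx1 EPf; congr (_ + _).
    by rewrite -(mulmxA Pf Pc^T E) -EPc !mulmxA.
  rewrite /L trmx_mul trmx_inv.
  transitivity (invmx X *m (X *m E *m Pf^T) *m invmx X^T).
    by rewrite !mulmxA mulVmx // mul1mx.
  by rewrite key2 !mulmxA -(mulmxA _ X^T) mulmxV // mulmx1.
- rewrite -[RHS]GC /M tr_row_mx mul_row_col /APc /C /pH_C; mxring.
- exact: EPc.
Qed.
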